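(* There is a constant $c>0$ such that the following holds. Let $k\in\mathbb N$ and let $\Pi$ be a prefix of $k$ temporal operators among $\mathsf X$, $\mathsf F$ and $\mathsf G$. Let $\phi$ be a formula of $\mathsf F(\mathrm{LTL}[\mathsf O])$ and $\psi$ a formula of $\mathrm{LTL}[\mathsf X,\mathsf{wX},\mathsf F,\mathsf G]$ with $\phi\equiv_\omega\psi$. Then the minimal deterministic Büchi automaton for $\mathcal L^\omega(\Pi(\psi))$ has at most $(k+1)\cdot2^{c\cdot\mathrm{size}(\phi)}$ states.
   Context: Let $AP$ be a finite set of atomic propositions and $\Sigma=2^{AP}$. Formulae (negation normal form) are built from literals $p,\neg p$ ($p\in AP$) with $\land,\lor$ and temporal operators $\mathsf X,\mathsf{wX},\mathsf F,\mathsf G,\mathsf O$ (among others). Infinite-trace semantics on $\sigma\in\Sigma^\omega$ at positions $i\in\mathbb N$: literals/Booleans as usual; $\mathsf X\phi$ and $\mathsf{wX}\phi$: $\phi$ holds at $i+1$; $\mathsf F\phi$/$\mathsf G\phi$: $\phi$ at some/every $j\ge i$; $\mathsf O\phi$: $\phi$ at some $0\le j\le i$. $\mathcal L^\omega(\phi)=\{\sigma\in\Sigma^\omega:\sigma,0\models\phi\}$ and $\phi\equiv_\omega\psi$ iff $\mathcal L^\omega(\phi)=\mathcal L^\omega(\psi)$. Size: literals 1, unary operators add 1, binary connectives sum plus 1. $\mathrm{LTL}[S]$: formulae whose temporal operators lie in $S$; $\mathsf F(\mathrm{LTL}[S])$: formulae $\mathsf F(\alpha)$ with $\alpha\in\mathrm{LTL}[S]$.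 $\Pi(\psi)$ denotes the formula obtained by prefixing $\psi$ with the sequence of operators $\Pi$. A deterministic Büchi automaton (DBA) is $(Q,\Sigma,\delta,q_0,F)$ with finite state set $Q$, total transition function $\delta:Q\times\Sigma\to Q$, initial state $q_0$ and accepting set $F\subseteq Q$; it accepts $\sigma\in\Sigma^\omega$ iff its unique run on $\sigma$ visits $F$ infinitely often. The size of a DBA is its number of states. *)

(* Defs.v *)
From mathcomp Require Import all_boot.
Set Implicit Arguments.
Unset Strict Implicit.
Unset Printing Implicit Defensive.

Section LTL.
Variable AP : finType.

Definition letter := {set AP}.
Definition trace := nat -> letter.

(* LTL formulae in negation normal form (operators relevant here). *)
Inductive form : Type :=
| Pos of AP
| Neg of AP
| And of form & form
| Or of form & form
| Nxt of form
| WNxt of form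
| Fin of form
| Glob of form
| Once of form.

Fixpoint sat (s : trace) (i : nat) (f : form) : Prop :=
  match f with
  | Pos p => p \in s i
  | Neg p => p \notin s i
  | And a b => sat s i a /\ sat s i b
  | Or a b => sat s i a \/ sat s i b
  | Nxt a => sat s i.+1 a
  | WNxt a => sat s i.+1 a
  | Fin a => exists j, i <= j /\ sat s j a
  | Glob a => forall j, i <= j -> sat s j a
  | Once a => exists j, j <= i /\ sat s j a
  end.

Definition lang (f : form) : trace -> Prop := fun s => sat s 0 f.

Definition omega_equiv (f g : form) : Prop := forall s : trace, lang f s <-> lang g s.

Fixpoint size_form (f : form) : nat :=
  match f with
  | Pos _ | Neg _ => 1
  | And a b | Or a b => size_form a + size_form b + 1
  | Nxt a | WNxt a | Fin a | Glob a | Once a => size_form a + 1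
  end.

Inductive top := opX | opWX | opF | opG | opO.

Definition top_eqb (a b : top) : bool :=
  match a, b with
  | opX, opX | opWX, opWX | opF, opF | opG, opG | opO, opO => true
  | _, _ => false
  end.

Fixpoint in_LTL (S : seq top) (f : form) : bool :=
  match f with
  | Pos _ | Neg _ => true
  | And a b | Or a b => in_LTL S a && in_LTL S b
  | Nxt a => has (top_eqb opX) S && in_LTL S a
  | WNxt a => has (top_eqb opWX) S && in_LTL S a
  | Fin a => has (top_eqb opF) S && in_LTL S a
  | Glob a => has (top_eqb opG) S && in_LTL S a
  | Once a => has (top_eqb opO) S && in_LTL S a
  end.

Definition in_F_LTL (S : seq top) (f : form) : Prop :=
  exists a, f = Fin a /\ in_LTL S a.

Inductive pre_op := pX | pF | pG.

Definition apply_pre (o : pre_op) (f : form) : form :=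
  match o with pX => Nxt f | pF => Fin f | pG => Glob f end.

Definition apply_prefix (Pi : seq pre_op) (f : form) : form :=
  foldr apply_pre f Pi.

Record dba : Type := DBA {
  dba_state : finType;
  dba_delta : dba_state -> letter -> dba_state;
  dba_init : dba_state;
  dba_acc : {set dba_state}
}.

Fixpoint dba_run (A : dba) (s : trace) (n : nat) : dba_state A :=
  match n with
  | 0 => dba_init A
  | n'.+1 => dba_delta (dba_run A s n') (s n')
  end.

Definition dba_accepts (A : dba) (s : trace) : Prop :=
  forall n, exists m, n <= m /\ dba_run A s m \in dba_acc A.

Definition dba_size (A : dba) : nat := #|dba_state A|.

Definition dba_recognizes (A : dba) (L : trace -> Prop) : Prop :=
  forall s, dba_accepts A s <-> L s.

Definition min_dba_at_most (L : trace -> Prop) (N : nat) : Prop :=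
  exists A : dba, dba_recognizes A L /\ dba_size A <= N.

End LTL.

(* Main.v *)
Require Import Defs.
From mathcomp Require Import all_boot.
From mathcomp Require Import zify.
Unset Strict Implicit.
Unset Printing Implicit Defensive.

Section S.
Variable AP : finType.
Implicit Types (s : trace AP) (f : form AP).

Fixpoint vt (f : form AP) : finType :=
  match f with
  | And a b | Or a b => Finite.clone (vt a * vt b)%type _
  | Once a => Finite.clone (bool * vt a)%type _
  | _ => Finite.clone unit _
  end.

Fixpoint holds (f : form AP) : vt f -> letter AP -> bool :=
  match f return vt f -> letter AP -> bool with
  | Pos p => fun _ l => p \in l
  | Neg p => fun _ l => p \notin l
  | And a b => fun v l => holds a v.1 l && holds b v.2 l
  | Or a b => fun v l => holds a v.1 l || holds b v.2 l
  | Once a => fun v l => v.1 || holds a v.2 l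
  | _ => fun _ _ => false
  end.

Fixpoint vstep (f : form AP) : vt f -> letter AP -> vt f :=
  match f return vt f -> letter AP -> vt f with
  | And a b => fun v l => (vstep a v.1 l, vstep b v.2 l)
  | Or a b => fun v l => (vstep a v.1 l, vstep b v.2 l)
  | Once a => fun v l => (v.1 || holds a v.2 l, vstep a v.2 l)
  | _ => fun v _ => v
  end.

Fixpoint vinit (f : form AP) : vt f :=
  match f return vt f with
  | And a b => (vinit a, vinit b)
  | Or a b => (vinit a, vinit b)
  | Once a => (false, vinit a)
  | _ => tt
  end.

Fixpoint vrun f s (j : nat) : vt f :=
  match j with 0 => vinit f | j'.+1 => vstep f (vrun f s j') (s j') end.

Lemma card_vt f : #|vt f| <= 2 ^ size_form f.
Proof.
elim: f => /= [p|p|a iha b ihb|a iha b ihb|a iha|a iha|a iha|a iha|a iha];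
  rewrite ?card_prod ?card_unit ?card_bool ?expnD ?expn1 //;
  have : 0 < 2 ^ size_form a by rewrite expn_gt0.
all: try (have := leq_mul iha ihb).
all: try lia.
- by move=> h _; apply: leq_trans h _; apply: leq_pmulr.
- by move=> h _; apply: leq_trans h _; apply: leq_pmulr.
- by move=> _; rewrite [_ * 2]mulnC leq_mul2l iha orbT.
Qed.

Lemma vrun_And a b s j : vrun (And a b) s j = (vrun a s j, vrun b s j).
Proof. by elim: j => //= j ->. Qed.

Lemma vrun_Or a b s j : vrun (Or a b) s j = (vrun a s j, vrun b s j).
Proof. by elim: j => //= j ->. Qed.

Lemma vrun_Once a s j : (vrun (Once a) s j).2 = vrun a s j /\
  ((vrun (Once a) s j).1 <-> exists2 i, i < j & holds a (vrun a s i) (s i)).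
Proof.
elim: j => [|j [IH1 IH2]] /=.
  by split=> //; split=> // -[].
rewrite IH1; split=> //; split.
  case/orP => [/IH2 [i hi h]|h]; first by exists i => //; apply: ltnW.
  by exists j.
move=> [i]; rewrite ltnS leq_eqVlt => /orP [/eqP -> ->|hi h]; first by rewrite orbT.
by apply/orP; left; apply/IH2; exists i.
Qed.

Lemma holds_sat f : in_LTL [:: opO] f -> forall s j, holds f (vrun f s j) (s j) <-> sat s j f.
Proof.
elim: f => [p|p|a iha b ihb|a iha b ihb|a iha|a iha|a iha|a iha|a iha] //= hin s j.
- rewrite vrun_And /=; case/andP: hin => ha hb.
  by split => [/andP [/(iha ha) h1 /(ihb hb) h2]|[/(iha ha) h1 /(ihb hb) h2]] //; apply/andP.
- rewrite vrun_Or /=; case/andP: hin => ha hb.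
  split => [/orP [/(iha ha) h|/(ihb hb) h]|[/(iha ha) h|/(ihb hb) h]]; by [left|right|apply/orP;left|apply/orP;right].
- have [E1 E2] := vrun_Once a s j; rewrite E1.
  split.
    case/orP => [/E2 [i hi h]|h]; first by exists i; split; [apply: ltnW|apply/(iha hin)].
    by exists j; split => //; apply/(iha hin).
  move=> [i [hi h]]; move: hi; rewrite leq_eqVlt => /orP [/eqP eij|hi].
    by subst i; apply/orP; right; apply/(iha hin).
  by apply/orP; left; apply/E2; exists i => //; apply/(iha hin).
Qed.

Definition tr_shift s i : trace AP := fun t => s (i + t).

Lemma sat_ext f s s' n : (forall t, s t = s' t) -> sat s n f <-> sat s' n f.
Proof.
move=> H; elim: f n => [p|p|a iha b ihb|a iha b ihb|a iha|a iha|a iha|a iha|a iha] n /=;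
  rewrite ?H //; firstorder.
Qed.

Lemma sat_shift f : in_LTL [:: opX; opWX; opF; opG] f ->
  forall s i n, sat s (i + n) f <-> sat (tr_shift s i) n f.
Proof.
elim: f => [p|p|a iha b ihb|a iha b ihb|a iha|a iha|a iha|a iha|a iha] //= hin s i n.
- case/andP: hin => ha hb; by rewrite (iha ha) (ihb hb).
- case/andP: hin => ha hb; by rewrite (iha ha) (ihb hb).
- by rewrite -(iha hin) addnS.
- by rewrite -(iha hin) addnS.
- split.
    move=> [j [hj h]]; exists (j - i); split; first lia.
    by apply/(iha hin); rewrite subnKC //; lia.
  by move=> [j [hj h]]; exists (i + j); split; [lia|apply/(iha hin)].
- split.
    by move=> h j hj; apply/(iha hin); apply: h; lia.
  move=> h j hj; have := h (j - i); rewrite -(iha hin) subnKC; last by lia.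
  by apply; lia.
Qed.

Lemma sat_mono f : in_LTL [:: opO] f -> forall s d j, sat (tr_shift s d) j f -> sat s (d + j) f.
Proof.
elim: f => [p|p|a iha b ihb|a iha b ihb|a iha|a iha|a iha|a iha|a iha] //= hin s d j.
- by case/andP: hin => ha hb [h1 h2]; split; [apply: iha|apply: ihb].
- by case/andP: hin => ha hb [h1|h2]; [left; apply: iha|right; apply: ihb].
- by move=> [i [hi h]]; exists (d + i); split; [lia|apply: iha].
Qed.

Definition P alpha s i := exists j, sat (tr_shift s i) j alpha.

Lemma P_down alpha : in_LTL [:: opO] alpha -> forall s i, P alpha s i.+1 -> P alpha s i.
Proof.
move=> ha s i [j h]; exists j.+1.
have := sat_mono _ ha (tr_shift s i) 1 j; rewrite add1n; apply.
apply: (proj1 (sat_ext alpha _ _ j _) h) => t; rewrite /tr_shift; congr (s _); lia.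
Qed.

Lemma P_downn alpha : in_LTL [:: opO] alpha -> forall s i d, P alpha s (i + d) -> P alpha s i.
Proof.
move=> ha s i; elim => [|d IH]; first by rewrite addn0.
by rewrite addnS => /(P_down _ ha) /IH.
Qed.

Definition isG (o : pre_op) := if o is pG then true else false.
Definition isX (o : pre_op) := if o is pX then true else false.

Lemma prefix_sem (Q : nat -> Prop) s psi : (forall i, Q i.+1 -> Q i) ->
  (forall i, sat s i psi <-> Q i) -> forall Pi i,
  sat s i (apply_prefix Pi psi) <->
    if has isG Pi then (forall j, Q j) else Q (i + count isX Pi).
Proof.
move=> Qd1 hQ.
have Qd : forall i d, Q (i + d) -> Q i.
  by move=> i; elim => [|d IH]; [rewrite addn0|rewrite addnS => /Qd1 /IH].
elim => [|o Pi IH] i /=; first by rewrite addn0.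
case: o => /=.
- apply: iff_trans (IH _) _; case: (has isG Pi) => //.
  by rewrite addSnnS.
- case hG: (has isG Pi).
    split; first by move=> [j [_ /IH]]; rewrite hG.
    by move=> h; exists i; split => //; apply/IH; rewrite hG.
  split.
    move=> [j [hj /IH]]; rewrite hG => h; apply: (Qd _ (j - i)).
    by have -> : i + count isX Pi + (j - i) = j + count isX Pi by lia.
  by move=> h; exists i; split => //; apply/IH; rewrite hG.
- case hG: (has isG Pi).
    split; first by move=> h; have := h i (leqnn i); move/IH; rewrite hG.
    by move=> h j _; apply/IH; rewrite hG.
  split.
    move=> h j; have := h (i + j) (leq_addr _ _); move/IH; rewrite hG => h'.
    apply: (Qd _ (i + count isX Pi)).
    by have -> : j + (i + count isX Pi) = i + j + count isX Pi by lia.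
  by move=> h j _; apply/IH; rewrite hG.
Qed.

Definition Cdba (alpha : form AP) : dba AP :=
  @DBA AP (vt (Once alpha)) (vstep (Once alpha)) (vinit (Once alpha))
    [set v : vt (Once alpha) | v.1].

Lemma Crun alpha s m : dba_run (Cdba alpha) s m = vrun (Once alpha) s m.
Proof. by elim: m => //= m ->. Qed.

Lemma C_rec alpha : in_LTL [:: opO] alpha ->
  dba_recognizes (Cdba alpha) (fun s => exists j, sat s j alpha).
Proof.
move=> ha s; split.
  move=> h; have [m [_ hm]] := h 0.
  move: hm; rewrite inE Crun => /(proj2 (vrun_Once alpha s m)) [j _ hj].
  by exists j; apply/(holds_sat _ ha).
move=> [j hj] n; exists (maxn n j.+1); split; first exact: leq_maxl.
rewrite inE Crun; apply/(proj2 (vrun_Once alpha s _)); exists j.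
  by rewrite leq_max leqnn orbT.
by apply/(holds_sat _ ha).
Qed.

Definition delay1 (A : dba AP) : dba AP :=
  @DBA AP (Finite.clone (option (dba_state A)) _)
    (fun o l => match o with None => Some (dba_init A) | Some x => Some (dba_delta x l) end)
    None [set o : option (dba_state A) | if o is Some x then x \in dba_acc A else false].

Lemma delay1_run A s t : dba_run (delay1 A) s t.+1 = Some (dba_run A (tr_shift s 1) t).
Proof. by elim: t => //= t ->. Qed.

Lemma delay1_acc A s : dba_accepts (delay1 A) s <-> dba_accepts A (tr_shift s 1).
Proof.
split => h n.
  have [m [hm ha]] := h n.+1.
  case: m hm ha => // m hm; rewrite delay1_run inE => ha.
  by exists m.
have [m [hm ha]] := h n.
by exists m.+1; split; [apply: leqW|rewrite delay1_run inE].
Qed.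

Fixpoint delayn m A := match m with 0 => A | m'.+1 => delay1 (delayn m' A) end.

Lemma delayn_rec (L : trace AP -> Prop) A :
  (forall s s', (forall t, s t = s' t) -> L s -> L s') -> dba_recognizes A L ->
  forall m, dba_recognizes (delayn m A) (fun s => L (tr_shift s m)).
Proof.
move=> hext hA; elim => [|m IH] s /=.
  split; first by move/hA; apply: hext.
  by move=> h; apply/hA; apply: (hext _ _ _ h).
rewrite delay1_acc IH.
by split; apply: hext => t; reflexivity.
Qed.

Lemma delayn_size m A : dba_size (delayn m A) = m + dba_size A.
Proof. by elim: m => //= m IH; rewrite /dba_size card_option -/(dba_size _) IH. Qed.

Definition Rdba (alpha : form AP) : dba AP :=
  @DBA AP (Finite.clone (bool * vt alpha)%type _)
    (fun v l => if holds alpha v.2 l then (true, vinit alpha) else (false, vstep alpha v.2 l))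
    (false, vinit alpha) [set v : (bool * vt alpha)%type | v.1].

Section Restart.
Variables (alpha : form AP) (s : trace AP).
Hypothesis ha : in_LTL [:: opO] alpha.
Notation run := (dba_run (Rdba alpha) s).

Fixpoint rs m := match m with 0 => 0
  | m'.+1 => if holds alpha (run m').2 (s m') then m'.+1 else rs m' end.

Lemma rs_le m : rs m <= m.
Proof. by elim: m => //= m IH; case: ifP => // _; apply: leqW. Qed.

Lemma rs_monoS m : rs m <= rs m.+1.
Proof. by rewrite /=; case: ifP => // _; apply: leqW; apply: rs_le. Qed.

Lemma rs_mono a b : a <= b -> rs a <= rs b.
Proof.
move=> hab; rewrite -(subnKC hab); elim: (b - a) => [|d IH]; first by rewrite addn0.
by apply: (leq_trans IH); rewrite addnS; apply: rs_monoS.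
Qed.

Lemma rs_fix m : rs (rs m) = rs m.
Proof.
elim: m => //= m IH; case: ifP => h //=.
by rewrite h.
Qed.

Lemma run_snd m : (run m).2 = vrun alpha (tr_shift s (rs m)) (m - rs m).
Proof.
elim: m => [|m IH] //=.
case: ifP => _ /=; first by rewrite subnn.
rewrite subSn ?rs_le //= -IH /tr_shift subnKC //; exact: rs_le.
Qed.

Lemma run_fst m : (run m.+1).1 = holds alpha (run m).2 (s m).
Proof. by rewrite /=; case: ifP. Qed.

Lemma holds_iff m : holds alpha (run m).2 (s m) <-> sat (tr_shift s (rs m)) (m - rs m) alpha.
Proof.
rewrite run_snd.
have -> : s m = tr_shift s (rs m) (m - rs m) by rewrite /tr_shift subnKC // rs_le.
exact: holds_sat.
Qed.

Lemma restart_holds m : 0 < rs m -> holds alpha (run (rs m).-1).2 (s (rs m).-1).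
Proof.
elim: m => //= m IH; case: ifP => h //.
Qed.

Lemma R_rec : dba_accepts (Rdba alpha) s <-> forall i, P alpha s i.
Proof.
split.
  move=> h i.
  have [m1 [h1 a1]] := h i.
  case: m1 h1 a1 => [|p] h1; first by rewrite inE.
  rewrite inE run_fst => a1.
  have e1 : rs p.+1 = p.+1 by rewrite /= a1.
  have [m2 [h2 a2]] := h p.+2.
  case: m2 h2 a2 => [|q] // h2; rewrite inE run_fst => /holds_iff hq.
  have hP : P alpha s (rs q) by exists (q - rs q).
  have hi : i <= rs q.
    apply: (leq_trans h1); rewrite -e1; apply: rs_mono; exact: h2.
  by apply: (P_downn _ ha _ _ (rs q - i)); rewrite subnKC.
move=> hP n.
have [j hj] := hP (rs n).
set T := rs n + j.
have hT : rs n <= rs T by rewrite -{1}rs_fix; apply: rs_mono; apply: leq_addr.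
have lt : rs n < rs T.+1.
  rewrite ltnNge; apply/negP => hle.
  have eT : rs T = rs n by apply/eqP; rewrite eqn_leq hT (leq_trans (rs_monoS T) hle).
  have : holds alpha (run T).2 (s T).
    by apply/holds_iff; rewrite eT /T addKn.
  move=> hh; move: hle; rewrite /= hh => hle.
  by move: (leq_trans hle (leq_addr j (rs n))); rewrite -/T ltnn.
have pos : 0 < rs T.+1 by apply: leq_ltn_trans lt.
have hh := restart_holds _ pos.
exists (rs T.+1); split.
  apply: ltnW; rewrite ltnNge; apply/negP => hle.
  have := rs_mono _ _ hle; rewrite rs_fix => hle'.
  by move: (leq_trans lt hle'); rewrite ltnn.
by rewrite -(prednK pos) inE run_fst.
Qed.

End Restart.

Theorem theorem4_aux :
  forall (k : nat) (Pi : seq pre_op) (phi psi : form AP),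
    size Pi = k ->
    in_F_LTL [:: opO] phi ->
    in_LTL [:: opX; opWX; opF; opG] psi ->
    omega_equiv phi psi ->
    min_dba_at_most (lang (apply_prefix Pi psi)) (k.+1 * 2 ^ (1 * size_form phi)).
Proof.
move=> k Pi phi psi hk [alpha [-> ha]] hpsi heq.
have hQ : forall s i, sat s i psi <-> P alpha s i.
  move=> s i; rewrite -[i]addn0 (sat_shift _ hpsi) addn0.
  rewrite -[sat _ 0 psi]/(lang psi _) -heq /lang /=.
  by split => [[j [_ h]]|[j h]]; exists j.
have hsem : forall s, lang (apply_prefix Pi psi) s <->
    if has isG Pi then (forall j, P alpha s j) else P alpha s (count isX Pi).
  by move=> s; apply: (prefix_sem _ _ _ (P_down _ ha s) (hQ s)).
have hcard : 2 * #|vt alpha| <= 2 ^ size_form (Fin alpha).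
  by rewrite /= expnD expn1 mulnC leq_mul2r card_vt orbT.
have hpos : 0 < 2 ^ size_form (Fin alpha) by rewrite expn_gt0.
rewrite mul1n.
case hG: (has isG Pi).
  exists (Rdba alpha); split.
    by move=> s; rewrite hsem hG; apply: R_rec.
  rewrite /dba_size /= card_prod card_bool.
  apply: (leq_trans hcard); apply: leq_pmull.
  done.
exists (delayn (count isX Pi) (Cdba alpha)); split.
  move=> s; rewrite hsem hG.
  have := delayn_rec (fun s => exists j, sat s j alpha) (Cdba alpha) _ (C_rec _ ha) (count isX Pi) s.
  apply.
  by move=> s1 s2 e [j h]; exists j; apply: (proj1 (sat_ext alpha _ _ j e) h).
rewrite delayn_size /dba_size /= card_prod card_bool.
have hc : count isX Pi <= k by rewrite -hk count_size.
move: hcard hpos hc; set X := 2 ^ _; set Y := #|_|.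
move=> h1 h2 h3.
nia.
Qed.

End S.

Theorem theorem4 :
  exists c : nat, 0 < c /\
  forall (AP : finType) (k : nat) (Pi : seq pre_op) (phi psi : form AP),
    size Pi = k ->
    in_F_LTL [:: opO] phi ->
    in_LTL [:: opX; opWX; opF; opG] psi ->
    omega_equiv phi psi ->
    min_dba_at_most (lang (apply_prefix Pi psi)) (k.+1 * 2 ^ (c * size_form phi)).
Proof.
exists 1; split => //.
move=> AP; exact: theorem4_aux.
Qed.
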